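(* Let $n\ge1$ and $\theta=[p](\tau_1,\dots,\tau_p)\in\Theta_n$. There is an isomorphism of $\Theta_n$-sets $\mathcal J(\theta)\cong\mathcal J'(\theta)$.
   Context: $\Theta_n=\Delta\wr\Theta_{n-1}$ ($\Theta_0$ terminal; $\Delta\wr\mathcal C$ has objects $[p](x_1,\dots,x_p)$ and morphisms given by $f:[p]\to[q]$ in $\Delta$ and morphisms $x_i\to y_j$ for $f(i-1)<j\le f(i)$); $\Theta_n$ is a full subcategory of strict $n$-categories, $N_n$ its nerve. We write $\theta$ also for the representable $\Theta_n[\theta]$. Let $I=[1]([0])$ (the representable $1$-globe) and $J=N_n(J_1)$, the nerve of the free groupoid on one arrow $0\to1$; the inclusion $I\to J$ picks the arrow $0\to1$. $\mathcal J(\theta):=\theta\times I\sqcup_{\theta_0\times I}\theta_0\times J$, where $\theta_0$ is the constant presheaf on the set $\Theta_n[\theta]_{[0]}$ of objects of $\theta$, mapped into $\theta$ in the evident (monomorphic) way. For $0\le i\le p$ let $\theta^i=[p+1](\tau_1,\dots,\tau_i,[0],\tau_{i+1},\dots,\tau_p)$; let $\alpha^i:\theta\to\theta^i$ ($0\le i\le p-1$) have underlying map skipping $i+1$, and $\beta^i:\theta\to\theta^i$ ($1\le i\le p$) underlying map skipping $i$, with identity components on the $\tau_j$ and the unique maps to $[0]$ on the inserted position. Let $\theta^i_J$ be the pushout of $\theta^i\leftarrow I\to J$, where $I\to\theta^i$ is the map with underlying $[1]\to[p+1]$, $0\mapsto i$, $1\mapsto i+1$, and $\varphi^i:\theta^i\to\theta^i_J$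 the induced map. $\mathcal J'(\theta)$ is the colimit of the diagram $\theta^0_J\xleftarrow{\varphi^0\alpha^0}\theta\xrightarrow{\varphi^1\beta^1}\theta^1_J\xleftarrow{\varphi^1\alpha^1}\theta\to\cdots\xleftarrow{\varphi^{p-1}\alpha^{p-1}}\theta\xrightarrow{\varphi^p\beta^p}\theta^p_J$. *)

(* Defs.v *)
From mathcomp Require Import all_boot.
From mathcomp Require Import zify.
From Stdlib Require List.
Set Implicit Arguments. Unset Strict Implicit. Unset Printing Implicit Defensive.

(* Obj 0 = the single object of Theta_0 ; Obj (S m) = seq (Obj m):
   the list [:: x_1; ...; x_p] represents [p](x_1, ..., x_p). *)
Fixpoint Obj (n : nat) : Type :=
  match n with 0 => unit | S m => seq (Obj m) end.

Definition zero (n : nat) : Obj n :=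
  match n return Obj n with 0 => tt | S m => [::] end.

Fixpoint Obj_eq_dec (n : nat) : forall x y : Obj n, {x = y} + {x <> y} :=
  match n return forall x y : Obj n, {x = y} + {x <> y} with
  | 0 => fun x y => match x, y with tt, tt => left erefl end
  | S m => fun x y => List.list_eq_dec (@Obj_eq_dec m) x y
  end.

(* i-th entry x_{i+1} (0-indexed) *)
Definition oth n (x : seq (Obj n)) (i : nat) : Obj n := nth (zero n) x i.

(* a map [p] -> [q] of Delta: monotone map 'I_p.+1 -> 'I_q.+1 *)
Definition monotone p q (f : 'I_p.+1 -> 'I_q.+1) : Prop :=
  forall a b : 'I_p.+1, a <= b -> f a <= f b.
Definition fn p q (f : 'I_p.+1 -> 'I_q.+1) (k : nat) : nat := f (inord k).
(* with 0-indexed i, j (paper's i+1, j+1): f(i) < j+1 <= f(i+1) *)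
Definition seg p q (f : 'I_p.+1 -> 'I_q.+1) (i j : nat) : bool :=
  (fn f i <= j) && (j < fn f i.+1).

Fixpoint Hom (n : nat) : Obj n -> Obj n -> Type :=
  match n return Obj n -> Obj n -> Type with
  | 0 => fun _ _ => unit
  | S m => fun (x y : seq (Obj m)) =>
      {f : 'I_(size x).+1 -> 'I_(size y).+1 &
        (monotone f * forall (i : 'I_(size x)) (j : 'I_(size y)),
            seg f i j -> @Hom m (oth x i) (oth y j))%type}
  end.
Arguments Hom : clear implicits.

Definition und m (x y : Obj m.+1) (f : Hom m.+1 x y) :
  'I_(size x).+1 -> 'I_(size y).+1 := projT1 f.
Definition und_mono m (x y : Obj m.+1) (f : Hom m.+1 x y) : monotone (und f) :=
  fst (projT2 f).
Definition cmp m (x y : Obj m.+1) (f : Hom m.+1 x y) :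
  forall (i : 'I_(size x)) (j : 'I_(size y)), seg (und f) i j -> Hom m (oth x i) (oth y j) :=
  snd (projT2 f).

Lemma mono_const p q : monotone (fun _ : 'I_p.+1 => (@ord0 q)).
Proof. by []. Qed.
Lemma mono_id p : monotone (fun k : 'I_p.+1 => k).
Proof. by []. Qed.
Lemma mono_comp p q r (f : 'I_p.+1 -> 'I_q.+1) (g : 'I_q.+1 -> 'I_r.+1) :
  monotone f -> monotone g -> monotone (fun k => g (f k)).
Proof. by move=> hf hg a b h; apply: hg; apply: hf. Qed.

(* Theta_n has a morphism between any two objects (constant at the object 0);
   used only as a default value where no data is required. *)
Fixpoint some_hom (n : nat) : forall x y : Obj n, Hom n x y :=
  match n return forall x y : Obj n, Hom n x y with
  | 0 => fun _ _ => tt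
  | S m => fun (x y : seq (Obj m)) =>
      existT _ (fun _ => ord0) (@mono_const (size x) (size y),
                                fun (i : 'I_(size x)) (j : 'I_(size y)) _ => @some_hom m (oth x i) (oth y j))
  end.

Fixpoint idH (n : nat) : forall x : Obj n, Hom n x x :=
  match n return forall x : Obj n, Hom n x x with
  | 0 => fun _ => tt
  | S m => fun (x : seq (Obj m)) =>
      existT _ (fun k => k) (@mono_id (size x), fun (i j : 'I_(size x)) _ =>
        match @Obj_eq_dec m (oth x i) (oth x j) with
        | left e => eq_rect _ (@Hom m (oth x i)) (@idH m (oth x i)) _ e
        | right _ => @some_hom m (oth x i) (oth x j)
        end)
  end.

(* identity if x = y, otherwise the (here: unique) map to y; used for maps whose
   components are identities or the unique maps to the terminal object [0] *)
Definition dflt n (x y : Obj n) : Hom n x y :=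
  match @Obj_eq_dec n x y with
  | left e => eq_rect x (@Hom n x) (@idH n x) y e
  | right _ => @some_hom n x y
  end.

Definition with_cond (b : bool) (T : Type) (k : b -> T) (d : T) : T :=
  (match b as b' return b = b' -> T with
   | true => fun e => k e | false => fun _ => d end) (erefl b).

(* composition: the component at (i,k) is psi_{j,k} o phi_{i,j} for the unique j
   with f(i) <= j < f(i+1) and g(j) <= k < g(j+1) *)
Fixpoint compH (n : nat) : forall x y z : Obj n, Hom n y z -> Hom n x y -> Hom n x z :=
  match n return forall x y z : Obj n, Hom n y z -> Hom n x y -> Hom n x z with
  | 0 => fun _ _ _ _ _ => tt
  | S m => fun (x y z : Obj m.+1) (g : Hom m.+1 y z) (f : Hom m.+1 x y) =>
      existT _ (fun k => und g (und f k))
        (mono_comp (und_mono f) (und_mono g), fun (i : 'I_(size x)) (k : 'I_(size z)) _ =>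
          match [pick j : 'I_(size y) | seg (und f) i j && seg (und g) j k] with
          | Some j =>
              @with_cond (seg (und f) i j && seg (und g) j k) (Hom m (oth x i) (oth z k))
                (fun e => @compH m _ _ _ (@cmp m y z g j k (proj2 (andb_prop _ _ e)))
                                 (@cmp m x y f i j (proj1 (andb_prop _ _ e))))
                (@some_hom m _ _)
          | None => @some_hom m _ _
          end)
  end.

Record PSh (n : nat) := {
  ob : Obj n -> Type;
  act : forall a b : Obj n, Hom n a b -> ob b -> ob a }.
Arguments ob {n} p a.
Arguments act {n} p {a b} f x.

Definition lawful n (P : PSh n) : Prop :=
  (forall a (x : ob P a), act P (idH a) x = x) /\
  (forall a b c (f : Hom n a b) (g : Hom n b c) (x : ob P c),
      act P (compH g f) x = act P f (act P g x)).

Definition PMap n (P Q : PSh n) := forall a : Obj n, ob P a -> ob Q a.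

Definition natural n (P Q : PSh n) (h : PMap P Q) : Prop :=
  forall a b (f : Hom n a b) (x : ob P b), h a (act P f x) = act Q f (h b x).

Definition is_pushout n (A B C : PSh n) (u : PMap A B) (v : PMap A C)
    (P : PSh n) (i1 : PMap B P) (i2 : PMap C P) : Prop :=
  lawful P /\ natural i1 /\ natural i2 /\
  (forall a x, i1 a (u a x) = i2 a (v a x)) /\
  forall (Z : PSh n) (z1 : PMap B Z) (z2 : PMap C Z),
    lawful Z -> natural z1 -> natural z2 ->
    (forall a x, z1 a (u a x) = z2 a (v a x)) ->
    exists h : PMap P Z, natural h /\
      (forall a x, h a (i1 a x) = z1 a x) /\ (forall a x, h a (i2 a x) = z2 a x) /\
      forall h' : PMap P Z, natural h' ->
        (forall a x, h' a (i1 a x) = z1 a x) -> (forall a x, h' a (i2 a x) = z2 a x) ->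
        forall a x, h' a x = h a x.

(* Q with (c i)_{i<=p} is a colimit of the zigzag
   P 0 <-l 0- X -r 0-> P 1 <-l 1- X -r 1-> ... <-l (p-1)- X -r (p-1)-> P p *)
Definition is_zigzag_colim n (p : nat) (X : PSh n) (P : nat -> PSh n)
    (l : forall i, PMap X (P i)) (r : forall i, PMap X (P i.+1))
    (Q : PSh n) (c : forall i, PMap (P i) Q) : Prop :=
  lawful Q /\ (forall i, i <= p -> natural (c i)) /\
  (forall i, i < p -> forall a x, c i a (l i a x) = c i.+1 a (r i a x)) /\
  forall (Z : PSh n) (z : forall i, PMap (P i) Z),
    lawful Z -> (forall i, i <= p -> natural (z i)) ->
    (forall i, i < p -> forall a x, z i a (l i a x) = z i.+1 a (r i a x)) ->
    exists h : PMap Q Z, natural h /\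
      (forall i, i <= p -> forall a x, h a (c i a x) = z i a x) /\
      forall h' : PMap Q Z, natural h' ->
        (forall i, i <= p -> forall a x, h' a (c i a x) = z i a x) ->
        forall a x, h' a x = h a x.

Definition Yon n (t : Obj n) : PSh n :=
  {| ob := fun a => Hom n a t; act := fun a b f g => compH g f |}.
Definition Ymap n (t t' : Obj n) (u : Hom n t t') : PMap (Yon t) (Yon t') :=
  fun a g => compH u g.
Definition prodP n (P Q : PSh n) : PSh n :=
  {| ob := fun a => (ob P a * ob Q a)%type;
     act := fun a b f x => (act P f x.1, act Q f x.2) |}.
(* theta_0 : constant presheaf on the set Theta_n[theta]_[0] of objects of theta *)
Definition constP n (t : Obj n) : PSh n :=
  {| ob := fun _ => Hom n (zero n) t; act := fun _ _ _ x => x |}.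
Definition incl0 n (t : Obj n) : PMap (constP t) (Yon t) :=
  fun a x => compH x (some_hom a (zero n)).

Definition globe m : Obj m.+1 := [:: zero m].
(* J = N(J_1): a theta-cell of the nerve of the contractible groupoid J_1 on {0,1}
   is just an assignment of objects {0..p} -> {0,1} *)
Definition JP m : PSh m.+1 :=
  {| ob := fun a : Obj m.+1 => 'I_(size a).+1 -> bool;
     act := fun a b f o => fun k => o (und f k) |}.
(* I -> J picks the arrow 0 -> 1 *)
Definition iJ m : PMap (Yon (globe m)) (JP m) :=
  fun a u k => nat_of_ord (und u k) == 1.

Definition mkUnd p q (F : nat -> nat) : 'I_p.+1 -> 'I_q.+1 :=
  fun k => inord (minn (F k) q).
Arguments mkUnd : clear implicits.
Lemma mkUnd_mono p q F : (forall a b, a <= b -> F a <= F b) -> monotone (mkUnd p q F).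
Proof.
move=> hF a b hab; rewrite /mkUnd !inordK ?ltnS ?geq_minr //.
have := hF _ _ hab; lia.
Qed.

(* theta^i = [p+1](tau_1..tau_i,[0],tau_{i+1}..tau_p) *)
Definition thi m (t : Obj m.+1) (i : nat) : Obj m.+1 :=
  take i t ++ zero m :: drop i t.

Definition skipF (s k : nat) : nat := if k < s then k else k.+1.
Lemma skipF_mono s a b : a <= b -> skipF s a <= skipF s b.
Proof. rewrite /skipF; case: ifP; case: ifP; lia. Qed.

(* theta -> theta^i with underlying coface map skipping s, identity components
   on the tau_j and the unique maps to the inserted [0] *)
Definition ins_map m (t : Obj m.+1) (i s : nat) : Hom m.+1 t (thi t i) :=
  existT _ (mkUnd (size t) (size (thi t i)) (skipF s))
    (@mkUnd_mono (size t) (size (thi t i)) (skipF s) (@skipF_mono s), fun (l : 'I_(size t)) (j : 'I_(size (thi t i))) _ => dflt (oth t l) (oth (thi t i) j)).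

Definition alpha m (t : Obj m.+1) (i : nat) := ins_map t i i.+1.
Definition beta m (t : Obj m.+1) (i : nat) := ins_map t i i.

Lemma shift_mono i a b : a <= b -> i + a <= i + b.
Proof. lia. Qed.
Definition uI m (t : Obj m.+1) (i : nat) : Hom m.+1 (globe m) (thi t i) :=
  existT _ (mkUnd 1 (size (thi t i)) (fun k => i + k))
    (@mkUnd_mono 1 (size (thi t i)) (fun k => i + k) (@shift_mono i),
     fun (l : 'I_1) (j : 'I_(size (thi t i))) _ => dflt (oth (globe m) l) (oth (thi t i) j)).

(* the span theta x I <- theta_0 x I -> theta_0 x J defining calJ(theta) *)
Definition span_u m (t : Obj m.+1) :
  PMap (prodP (constP t) (Yon (globe m))) (prodP (Yon t) (Yon (globe m))) :=
  fun a x => (@incl0 m.+1 t a x.1, x.2).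
Definition span_v m (t : Obj m.+1) :
  PMap (prodP (constP t) (Yon (globe m))) (prodP (constP t) (JP m)) :=
  fun a x => (x.1, @iJ m a x.2).

Arguments Yon {n} t.
Arguments Ymap {n t t'} u.
Arguments prodP {n} P Q.
Arguments constP {n} t.
Arguments globe : clear implicits.
Arguments JP : clear implicits.
Arguments iJ : clear implicits.
Arguments thi {m} t i.
Arguments alpha {m} t i.
Arguments beta {m} t i.
Arguments uI {m} t i.
Arguments span_u {m} t.
Arguments span_v {m} t.
Arguments compH {n x y z} g f.
Arguments natural {n P Q} h.
Arguments lawful {n} P.

(* Main.v *)
Require Import Defs.
From mathcomp Require Import all_boot.
From mathcomp Require Import zify.
From Stdlib Require Import FunctionalExtensionality ProofIrrelevance Eqdep_dec ClassicalEpsilon.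
Set Implicit Arguments. Unset Strict Implicit. Unset Printing Implicit Defensive.

Lemma with_cond_true (b : bool) T (k : b -> T) d (e : b) : with_cond k d = k e.
Proof.
case: b k e => // k e; rewrite /with_cond /=.
by rewrite (eq_irrelevance e (erefl true)).
Qed.

Section S.
Variable m : nat.

Definition cmpN (x y : Obj m.+1) (f : Hom m.+1 x y) (i j : nat) : Hom m (oth x i) (oth y j) :=
  @with_cond ((i < size x) && (j < size y) && seg (und f) i j) (Hom m (oth x i) (oth y j))
    (fun e => @cmp m x y f (Ordinal (proj1 (andP (proj1 (andP e)))))
                           (Ordinal (proj2 (andP (proj1 (andP e))))) (proj2 (andP e)))
    (some_hom _ _).

Lemma cmpN_E (x y : Obj m.+1) (f : Hom m.+1 x y) (i : 'I_(size x)) (j : 'I_(size y)) (h : seg (und f) i j) :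
  cmpN f i j = @cmp m x y f i j h.
Proof.
have e : (i < size x) && (j < size y) && seg (und f) i j by rewrite !ltn_ord h.
rewrite /cmpN (@with_cond_true _ _ _ _ e).
case: i h e => i hi h e; case: j h e => j hj h e /=.
move: (proj1 (andP (proj1 (andP e)))) (proj2 (andP (proj1 (andP e)))) (proj2 (andP e)) => a b c.
by rewrite (eq_irrelevance a hi) (eq_irrelevance b hj) (eq_irrelevance c h).
Qed.

Lemma fnE p q (f : 'I_p.+1 -> 'I_q.+1) (k : 'I_p.+1) : fn f k = f k.
Proof. by rewrite /fn inord_val. Qed.

Lemma fn_le p q (f : 'I_p.+1 -> 'I_q.+1) k : fn f k <= q.
Proof. by rewrite /fn -ltnS. Qed.

Lemma fn_mono p q (f : 'I_p.+1 -> 'I_q.+1) a b : monotone f -> a <= b -> b <= p -> fn f a <= fn f b.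
Proof.
move=> hf hab hb; rewrite /fn; apply: hf.
by rewrite !inordK //; lia.
Qed.

Lemma Hom_ext (x y : Obj m.+1) (f g : Hom m.+1 x y) :
  (forall k, k <= size x -> fn (und f) k = fn (und g) k) ->
  (forall i j, i < size x -> j < size y -> seg (und f) i j -> cmpN f i j = cmpN g i j) -> f = g.
Proof.
case: f => F [mF cF]; case: g => G [mG cG] hfn hc.
have eFG : F = G.
  apply: functional_extensionality => k; apply: val_inj => /=.
  by have := hfn k (ltn_ord k); rewrite !fnE.
subst G; rewrite (proof_irrelevance _ mF mG); do 2 f_equal.
apply: functional_extensionality_dep => i; apply: functional_extensionality_dep => j.
apply: functional_extensionality_dep => h.
have H := hc i j (ltn_ord i) (ltn_ord j) h.
have E1 := @cmpN_E x y (existT _ F (mF, cF)) i j h.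
have E2 := @cmpN_E x y (existT _ F (mG, cG)) i j h.
rewrite E1 E2 in H; exact: H.
Qed.
End S.


Lemma hom0' m (x y : Obj m) (e : y = zero m) (f g : Hom m x y) : f = g.
Proof.
subst y; case: m x f g => [|m] x f g; first by case: f; case: g.
apply: Hom_ext => [k hk|i j _]; last by [].
by have := fn_le (und f) k; have := fn_le (und g) k; rewrite /=; lia.
Qed.

Section C.
Variable m : nat.
Implicit Types x y z w : Obj m.+1.

Lemma fn_comp x y z (f : Hom m.+1 x y) (g : Hom m.+1 y z) k :
  fn (und (compH g f)) k = fn (und g) (fn (und f) k).
Proof. by rewrite /fn /= inord_val. Qed.

Lemma seg_lt x y (f : Hom m.+1 x y) i j : seg (und f) i j -> j < size y.
Proof. by case/andP=> _ h; have := fn_le (und f) i.+1; lia. Qed.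

Lemma fmono x y (f : Hom m.+1 x y) a b : a <= b -> b <= size x -> fn (und f) a <= fn (und f) b.
Proof. by move=> h1 h2; apply: fn_mono => //; exact: (und_mono f). Qed.

Lemma seg_comp x y z (f : Hom m.+1 x y) (g : Hom m.+1 y z) i j k :
  i < size x -> seg (und f) i j -> seg (und g) j k -> seg (und (compH g f)) i k.
Proof.
move=> hi hf hg; have hj := seg_lt hf; move: hf hg.
rewrite /seg !fn_comp => /andP[a1 a2] /andP[b1 b2].
have := @fmono _ _ g (fn (und f) i) j a1 (ltnW hj).
have := @fmono _ _ g j.+1 (fn (und f) i.+1) a2 (fn_le _ _).
move=> *; apply/andP; split; lia.
Qed.

Lemma seg_uniq x y z (f : Hom m.+1 x y) (g : Hom m.+1 y z) i j j' k :
  seg (und f) i j -> seg (und f) i j' -> seg (und g) j k -> seg (und g) j' k -> j = j'.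
Proof.
move=> h1 h2 h3 h4; have l1 := seg_lt h1; have l2 := seg_lt h2.
move: h3 h4; rewrite /seg => /andP[a1 a2] /andP[b1 b2].
case: (ltngtP j j') => // hjj.
- by have := @fmono _ _ g j.+1 j' hjj (ltnW l2); lia.
- by have := @fmono _ _ g j'.+1 j hjj (ltnW l1); lia.
Qed.

Lemma cmpN_compO x y z (f : Hom m.+1 x y) (g : Hom m.+1 y z) (i : 'I_(size x)) j (k : 'I_(size z)) :
  seg (und f) i j -> seg (und g) j k -> cmpN (compH g f) i k = compH (cmpN g j k) (cmpN f i j).
Proof.
move=> hf hg; have hs := seg_comp (ltn_ord i) hf hg.
have hj := seg_lt hf.
rewrite (cmpN_E hs) /=.
rewrite /cmp /=.
case: (pickP (fun j0 : 'I_(size y) => seg (und f) i j0 && seg (und g) j0 k)) => [j' /andP[h1 h2] | hn]; last first.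
  by have := hn (Ordinal hj); rewrite /= hf hg.
have ej : j = j' by apply: (seg_uniq hf h1 hg h2).
subst j.
have e : seg (und f) i j' && seg (und g) j' k by rewrite h1 h2.
rewrite (@with_cond_true _ _ _ _ e) (cmpN_E h1) (cmpN_E h2).
by congr compH; congr cmp; apply: eq_irrelevance.
Qed.

Lemma cmpN_comp x y z (f : Hom m.+1 x y) (g : Hom m.+1 y z) i j k :
  i < size x -> k < size z ->
  seg (und f) i j -> seg (und g) j k -> cmpN (compH g f) i k = compH (cmpN g j k) (cmpN f i j).
Proof.
move=> hi hk; exact: (@cmpN_compO x y z f g (Ordinal hi) j (Ordinal hk)).
Qed.
End C.

Lemma mid_nat (G : nat -> nat) a b k :
  (forall u v, a <= u -> u <= v -> v <= b -> G u <= G v) -> a <= b ->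
  G a <= k < G b -> exists2 j, a <= j < b & G j <= k < G j.+1.
Proof.
elim: b => [|b IH] hG hab0 /andP[h1 h2].
  by move: hab0; rewrite leqn0 => /eqP e; subst a; lia.
case: (leqP (G b) k) => hb.
  exists b => //; apply/andP; split => //.
  case: (leqP a b) => //= hab.
  have e : a = b.+1 by lia.
  by subst a; lia.
have hab : a <= b.
  case: (leqP a b) => //= hab.
  have e : a = b.+1 by lia.
  subst a; lia.
have [j /andP[j1 j2] hj] := IH (fun u v h1 h2 h3 => hG u v h1 h2 (leqW h3)) hab (introT andP (conj h1 hb)).
exists j => //; apply/andP; split => //; lia.
Qed.

Lemma mid m (x y z : Obj m.+1) (f : Hom m.+1 x y) (g : Hom m.+1 y z) i k :
  i < size x -> seg (und (compH g f)) i k -> exists2 j, seg (und f) i j & seg (und g) j k.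
Proof.
move=> hi; rewrite /seg !fn_comp => hs.
have hb := fn_le (und f) i.+1.
have [j /andP[j1 j2] hj] : exists2 j, fn (und f) i <= j < fn (und f) i.+1 & fn (und g) j <= k < fn (und g) j.+1.
  apply: mid_nat hs; last by apply: fmono => //; lia.
  move=> u v _ h2 h3; apply: fmono => //; lia.
by exists j; rewrite /seg ?j1 ?j2.
Qed.

Lemma Obj_dec_refl n (x : Obj n) : Obj_eq_dec x x = left erefl.
Proof.
case: (Obj_eq_dec x x) => [e|ne]; last by case: ne.
by rewrite (UIP_dec (@Obj_eq_dec n) e erefl).
Qed.

Lemma dflt_id n (x : Obj n) : dflt x x = idH x.
Proof. by rewrite /dflt Obj_dec_refl. Qed.

Lemma fn_id m (y : Obj m.+1) v : v <= size y -> fn (und (idH y)) v = v.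
Proof. by move=> h; rewrite /fn /= inordK. Qed.

Lemma seg_id m (y : Obj m.+1) k : k < size y -> seg (und (idH y)) k k.
Proof. by move=> h; rewrite /seg !fn_id //; lia. Qed.

Lemma cmpN_id m (y : Obj m.+1) k : k < size y -> cmpN (idH y) k k = idH (oth y k).
Proof.
move=> h; rewrite (@cmpN_E _ _ _ _ (Ordinal h) (Ordinal h) (seg_id h)).
by rewrite /cmp /= Obj_dec_refl.
Qed.

Lemma comp_id_l m : forall (x y : Obj m) (f : Hom m x y), compH (idH y) f = f.
Proof.
elim: m => [|m IH] x y f; first by case: f.
have hf : forall k, k <= size x -> fn (und (compH (idH y) f)) k = fn (und f) k.
  by move=> k hk; rewrite fn_comp fn_id // fn_le.
apply: Hom_ext => // i j hi hj hs.
have hs' : seg (und f) i j.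
  by move: hs; rewrite /seg (hf i (ltnW hi)) (hf i.+1 hi).
by rewrite (cmpN_comp hi hj hs' (seg_id hj)) cmpN_id // IH.
Qed.

Lemma comp_assoc m : forall (x y z w : Obj m) (f : Hom m x y) (g : Hom m y z) (h : Hom m z w),
  compH h (compH g f) = compH (compH h g) f.
Proof.
elim: m => [|m IH] x y z w f g h; first by [].
apply: Hom_ext => [k hk|i l hi hl hs]; first by rewrite !fn_comp.
have [k h1 h2] := mid hi hs.
have [j h3 h4] := mid hi h1.
have hk := seg_lt h4.
have hj := seg_lt h3.
rewrite (cmpN_comp hi hl h1 h2) (cmpN_comp hi hk h3 h4).
rewrite (cmpN_comp hi hl h3 (seg_comp hj h4 h2)) (cmpN_comp hj hl h4 h2).
by rewrite IH.
Qed.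


Section D.
Variable m : nat.

Definition mkH (x y : Obj m.+1) (F : nat -> nat) (HF : forall a b, a <= b -> F a <= F b)
  (C : forall i j : nat, Hom m (oth x i) (oth y j)) : Hom m.+1 x y :=
  existT _ (mkUnd (size x) (size y) F)
    (@mkUnd_mono (size x) (size y) F HF, fun (i : 'I_(size x)) (j : 'I_(size y)) _ => C i j).

Lemma fn_mkH x y F HF C k : k <= size x -> fn (und (@mkH x y F HF C)) k = minn (F k) (size y).
Proof. by move=> hk; rewrite /fn /= /mkUnd !inordK //; lia. Qed.

Lemma cmpN_mkH x y F HF C i j : i < size x -> j < size y -> seg (und (@mkH x y F HF C)) i j ->
  cmpN (@mkH x y F HF C) i j = C i j.
Proof.
move=> hi hj hs; rewrite (@cmpN_E _ _ _ _ (Ordinal hi) (Ordinal hj) hs).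
by rewrite /cmp.
Qed.

Lemma ins_mapE (t : Obj m.+1) i s :
  ins_map t i s = @mkH t (thi t i) (skipF s) (@skipF_mono s) (fun l j => dflt (oth t l) (oth (thi t i) j)).
Proof. by []. Qed.

Lemma uIE (t : Obj m.+1) i :
  uI t i = @mkH (globe m) (thi t i) (fun k => i + k) (@shift_mono i) (fun l j => dflt (oth (globe m) l) (oth (thi t i) j)).
Proof. by []. Qed.

Lemma size_thi (t : Obj m.+1) i : size (thi t i) = (size t).+1.
Proof. rewrite /thi size_cat /= size_take size_drop; case: ltnP; lia. Qed.

Lemma oth_thi (t : Obj m.+1) i l : i <= size t ->
  oth (thi t i) l = if l < i then oth t l else if l == i then zero m else oth t l.-1.
Proof.
move=> hi; rewrite /oth /thi nth_cat size_take.
have -> : (if i < size t then i else size t) = i by case: ltnP; lia.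
case: ltnP => h1; first exact: nth_take.
case: eqP => [->|h2]; first by rewrite subnn.
have -> : l - i = (l - i).-1.+1 by lia.
by rewrite /= nth_drop; congr nth; lia.
Qed.

Lemma oth_globe (l : nat) : oth (globe m) l = zero m.
Proof. by case: l => //= l; rewrite /oth /= nth_nil. Qed.

Lemma fn_globe a (u : Hom m.+1 a (globe m)) k : fn (und u) k <= 1.
Proof. exact: fn_le. Qed.

Lemma into_globe a (f g : Hom m.+1 a (globe m)) :
  (forall k, k <= size a -> fn (und f) k = fn (und g) k) -> f = g.
Proof. move=> h; apply: Hom_ext => // i j _ _ _; apply: hom0'; exact: oth_globe. Qed.

End D.


Definition sigF (i k : nat) := if k <= i then k else k.-1.
Lemma sigF_mono i a b : a <= b -> sigF i a <= sigF i b.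
Proof. rewrite /sigF; do 2 case: ifP; lia. Qed.
Definition tauF (i k : nat) := if k <= i then 0 else 1.
Lemma tauF_mono i a b : a <= b -> tauF i a <= tauF i b.
Proof. rewrite /tauF; do 2 case: ifP; lia. Qed.

Ltac seglia := unfold seg, sigF, tauF, skipF in *;
  repeat match goal with H : is_true (_ && _) |- _ =>
    apply andb_prop in H; destruct H end;
  try (apply/andP; split);
  repeat match goal with
   | |- context [if ?b then _ else _] => destruct b eqn:?
   | H : context [if ?b then _ else _] |- _ => destruct b eqn:?
  end; lia.

Section E.
Variable m : nat.
Variable t : Obj m.+1.
Local Notation p := (size t).

Definition sig i : Hom m.+1 (thi t i) t :=
  @mkH m (thi t i) t (sigF i) (@sigF_mono i) (fun l j => dflt (oth (thi t i) l) (oth t j)).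
Definition tau i : Hom m.+1 (thi t i) (globe m) :=
  @mkH m (thi t i) (globe m) (tauF i) (@tauF_mono i) (fun l j => some_hom _ _).
Definition vtx i : Hom m.+1 (zero m.+1) t :=
  @mkH m (zero m.+1) t (fun _ => i) (fun _ _ _ => leqnn i) (fun l j => some_hom _ _).

Definition fnc a b (f : Hom m.+1 a b) j := fn (und f) (minn j (size a)).
Lemma fnc_mono a b (f : Hom m.+1 a b) j k : j <= k -> fnc f j <= fnc f k.
Proof. move=> h; rewrite /fnc; apply: fmono; lia. Qed.
Lemma fnc_E a b (f : Hom m.+1 a b) j : j <= size a -> fnc f j = fn (und f) j.
Proof. by move=> h; rewrite /fnc; congr fn; lia. Qed.

Definition Lc a i (x : Hom m.+1 a t) (l j : nat) : Hom m (oth a l) (oth (thi t i) j) :=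
  if j == i then some_hom _ _
  else compH (dflt (oth t (sigF i j)) (oth (thi t i) j)) (cmpN x l (sigF i j)).

Lemma LF_mono a (x : Hom m.+1 a t) (u : Hom m.+1 a (globe m)) j k :
  j <= k -> fnc x j + fnc u j <= fnc x k + fnc u k.
Proof. by move=> h; apply: leq_add; apply: fnc_mono. Qed.

Definition L a i (x : Hom m.+1 a t) (u : Hom m.+1 a (globe m)) : Hom m.+1 a (thi t i) :=
  @mkH m a (thi t i) (fun j => fnc x j + fnc u j) (@LF_mono a x u) (Lc i x).

Definition valid a (x : Hom m.+1 a t) (u : Hom m.+1 a (globe m)) i : Prop :=
  i <= p /\ forall j, j <= size a ->
    (fn (und u) j = 0 -> fn (und x) j <= i) /\ (0 < fn (und u) j -> i <= fn (und x) j).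

Lemma fn_ins i s k : k <= p -> fn (und (ins_map t i s)) k = minn (skipF s k) p.+1.
Proof. by move=> h; rewrite ins_mapE fn_mkH // size_thi. Qed.
Lemma cmpN_ins i s l j : l < p -> j < p.+1 -> seg (und (ins_map t i s)) l j ->
  cmpN (ins_map t i s) l j = dflt (oth t l) (oth (thi t i) j).
Proof. by move=> h1 h2 h3; rewrite ins_mapE cmpN_mkH // size_thi. Qed.

Lemma fn_sig i k : i <= p -> k <= p.+1 -> fn (und (sig i)) k = sigF i k.
Proof. move=> hi hk; rewrite /sig fn_mkH ?size_thi //; rewrite /sigF; case: ifP => ?.
lia. lia. Qed.
Lemma cmpN_sig i l j : l < p.+1 -> j < p -> seg (und (sig i)) l j ->
  cmpN (sig i) l j = dflt (oth (thi t i) l) (oth t j).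
Proof. by move=> h1 h2 h3; rewrite /sig cmpN_mkH // size_thi. Qed.
Lemma fn_tau i k : k <= p.+1 -> fn (und (tau i)) k = tauF i k.
Proof. by move=> hk; rewrite /tau fn_mkH ?size_thi //; rewrite /tauF /=; case: ifP => ?; lia. Qed.
Lemma fn_vtx i k : i <= p -> fn (und (vtx i)) k = i.
Proof. move=> hi; rewrite /vtx /fn /= /mkUnd inordK //; lia. Qed.
Lemma fn_L a i x u k : k <= size a -> fn (und (@L a i x u)) k = fn (und x) k + fn (und u) k.
Proof.
move=> hk; rewrite /L fn_mkH // size_thi !fnc_E //.
have := fn_le (und x) k; have := fn_le (und u) k; rewrite /=; lia.
Qed.
Lemma cmpN_L a i x u l j : l < size a -> j < p.+1 -> seg (und (@L a i x u)) l j ->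
  cmpN (@L a i x u) l j = Lc i x l j.
Proof. by move=> h1 h2 h3; rewrite /L cmpN_mkH // size_thi. Qed.


Lemma dflt_cancel (A B C : Obj m) (e : B = C) (g : Hom m A B) :
  compH (dflt C B) (compH (dflt B C) g) = g.
Proof. by subst C; rewrite dflt_id !comp_id_l. Qed.

Lemma dflt_pair (B C : Obj m) (e : B = C) :
  compH (dflt C B) (dflt B C) = compH (dflt B B) (dflt B B).
Proof. by subst C. Qed.

Lemma oth_thi_i i : i <= p -> oth (thi t i) i = zero m.
Proof. by move=> hi; rewrite oth_thi // ltnn eqxx. Qed.

Lemma oth_thi_ne i l : i <= p -> l != i -> oth (thi t i) l = oth t (sigF i l).
Proof.
move=> hi /negbTE hl; rewrite oth_thi // hl /sigF.
case: ltnP => h; first by rewrite ifT //; lia.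
by rewrite ifF //; apply/negbTE; rewrite -ltnNge; move: hl => /eqP; lia.
Qed.

Lemma seg_L_x a (x : Hom m.+1 a t) u i j l : valid x u i -> j < size a ->
  seg (und (L i x u)) j l -> l != i -> seg (und x) j (sigF i l).
Proof.
move=> [hi hv] hj hs /eqP hl.
have [a1 a2] := hv j (ltnW hj); have [b1 b2] := hv j.+1 hj.
have := fn_globe u j; have := fn_globe u j.+1.
move: hs; rewrite /seg !fn_L // ?(ltnW hj) // => hs c1 c2.
seglia.
Qed.

Lemma L_comp a b (h : Hom m.+1 b a) x u i : valid x u i ->
  compH (L i x u) h = L i (compH x h) (compH u h).
Proof.
move=> hv.
have hfn : forall k, k <= size b ->
    fn (und (compH (L i x u) h)) k = fn (und (L i (compH x h) (compH u h))) k.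
  by move=> k hk; rewrite fn_comp fn_L ?fn_le // fn_L // !fn_comp.
apply: Hom_ext => // j l hj hl hs.
have hs2 : seg (und (L i (compH x h) (compH u h))) j l.
  by move: hs; rewrite /seg (hfn j (ltnW hj)) (hfn j.+1 hj).
have [j' h1 h2] := mid hj hs.
have hj' := seg_lt h1.
rewrite size_thi in hl.
rewrite (cmpN_comp hj _ h1 h2) ?size_thi // cmpN_L // cmpN_L // /Lc.
case: eqP => hli.
  apply: hom0'; rewrite hli; exact: oth_thi_i (proj1 hv).
have hx := seg_L_x hv hj' h2 (introN eqP hli).
have hl' := seg_lt hx.
by rewrite (cmpN_comp hj hl' h1 hx) comp_assoc.
Qed.

Lemma L_ins a (x : Hom m.+1 a t) u i s : valid x u i -> i <= s <= i.+1 ->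
  (forall k, k <= size a -> fn (und x) k + fn (und u) k = skipF s (fn (und x) k)) ->
  L i x u = compH (ins_map t i s) x.
Proof.
move=> hv /andP[s1 s2] hk.
have hfn : forall k, k <= size a -> fn (und (L i x u)) k = fn (und (compH (ins_map t i s) x)) k.
  move=> k hk'; rewrite fn_L // fn_comp fn_ins ?fn_le // -hk //.
  have := fn_le (und x) k; have := fn_globe u k; lia.
apply: Hom_ext => // j l hj hl hs.
rewrite size_thi in hl.
rewrite cmpN_L // /Lc.
case: eqP => hli.
  apply: hom0'; rewrite hli; exact: oth_thi_i (proj1 hv).
have hx := seg_L_x hv hj hs (introN eqP hli).
have hl' := seg_lt hx.
have hi := proj1 hv.
have hsi : seg (und (ins_map t i s)) (sigF i l) l.
  rewrite /seg !fn_ins //; seglia.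
by rewrite (cmpN_comp hj _ hx hsi) ?size_thi // cmpN_ins.
Qed.

Lemma L_alpha a (x : Hom m.+1 a t) u i : valid x u i -> valid x u i.+1 ->
  L i x u = compH (alpha t i) x.
Proof.
move=> h1 h2; apply: L_ins => //; first by rewrite leqnn leqnSn.
move=> k hk; have [a1 a2] := (proj2 h1) k hk; have [b1 b2] := (proj2 h2) k hk.
have := fn_globe u k; rewrite /skipF; case: ifP => ?; lia.
Qed.

Lemma L_beta a (x : Hom m.+1 a t) u i : valid x u i -> valid x u i.+1 ->
  L i.+1 x u = compH (beta t i.+1) x.
Proof.
move=> h1 h2; apply: L_ins => //; first by rewrite leqnn leqnSn.
move=> k hk; have [a1 a2] := (proj2 h1) k hk; have [b1 b2] := (proj2 h2) k hk.
have := fn_globe u k; rewrite /skipF; case: ifP => ?; lia.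
Qed.
End E.


Ltac iflia := unfold sigF, tauF, skipF in *;
  repeat match goal with
   | |- context [if ?b then _ else _] => destruct b eqn:?
   | H : context [if ?b then _ else _] |- _ => destruct b eqn:?
  end; lia.

Section F.
Variable m : nat.
Variable t : Obj m.+1.
Local Notation p := (size t).

Lemma sig_ab i : i < p -> compH (sig t i) (alpha t i) = compH (sig t i.+1) (beta t i.+1).
Proof.
move=> hi.
have hfn : forall k, k <= p -> fn (und (compH (sig t i) (alpha t i))) k = k.
  move=> k hk; rewrite fn_comp /alpha fn_ins // fn_sig; try lia.
  iflia.
have hfn2 : forall k, k <= p -> fn (und (compH (sig t i.+1) (beta t i.+1))) k = k.
  move=> k hk; rewrite fn_comp /beta fn_ins // fn_sig; try lia.
  iflia.
apply: Hom_ext => [k hk|l j hl hj hs]; first by rewrite hfn // hfn2.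
have ej : j = l by move: hs; rewrite /seg !hfn //; lia.
subst j.
pose j1 := if l < i then l else l.+1.
pose j2 := if l < i.+1 then l else l.+1.
have s1 : seg (und (alpha t i)) l j1 by rewrite /alpha /seg !fn_ins // /j1; seglia.
have s2 : seg (und (sig t i)) j1 l by rewrite /seg !fn_sig // /j1; seglia.
have s3 : seg (und (beta t i.+1)) l j2 by rewrite /beta /seg !fn_ins // /j2; seglia.
have s4 : seg (und (sig t i.+1)) j2 l by rewrite /seg !fn_sig // /j2; seglia.
rewrite (cmpN_comp hl hl s1 s2) (cmpN_comp hl hl s3 s4).
rewrite /alpha /beta !cmpN_ins ?cmpN_sig //; try (rewrite /j1 /j2; iflia).
rewrite dflt_pair; last first.
  rewrite oth_thi_ne; try lia.
    by congr oth; rewrite /sigF /j1; iflia.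
  by rewrite /j1; apply/eqP; iflia.
rewrite [in RHS]dflt_pair //.
rewrite oth_thi_ne; try lia.
  by congr oth; rewrite /sigF /j2; iflia.
by rewrite /j2; apply/eqP; iflia.
Qed.


Lemma tau_ab i : i < p -> compH (tau t i) (alpha t i) = compH (tau t i.+1) (beta t i.+1).
Proof.
move=> hi; apply: into_globe => k hk.
rewrite !fn_comp /alpha /beta !fn_ins // !fn_tau; iflia.
Qed.

Lemma fn_uI i k : i <= p -> k <= 1 -> fn (und (uI t i)) k = i + k.
Proof. by move=> hi hk; rewrite uIE fn_mkH // size_thi; lia. Qed.

Lemma fn_some a k : fn (und (some_hom a (zero m.+1))) k = 0.
Proof. by have := fn_le (und (some_hom a (zero m.+1))) k; rewrite /=; lia. Qed.

Lemma sig_uI i : i <= p -> compH (sig t i) (uI t i) = compH (vtx t i) (some_hom (globe m) (zero m.+1)).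
Proof.
move=> hi.
have h1 : forall k, k <= 1 -> fn (und (compH (sig t i) (uI t i))) k = i.
  by move=> k hk; rewrite fn_comp fn_uI // fn_sig //; iflia.
apply: Hom_ext => [k hk|l j hl hj hs].
  by rewrite h1 // fn_comp fn_vtx.
have l0 : l = 0 by move: hl => /=; lia.
subst l; move: hs; rewrite /seg !h1 // => /andP[]; lia.
Qed.

Lemma tau_uI i : i <= p -> compH (tau t i) (uI t i) = idH (globe m).
Proof.
move=> hi; apply: into_globe => k hk.
rewrite /= in hk; rewrite fn_comp fn_uI // fn_tau ?fn_id //; iflia.
Qed.

Lemma tau_L a (x : Hom m.+1 a t) u i : valid x u i -> compH (tau t i) (L i x u) = u.
Proof.
move=> [hi hv]; apply: into_globe => k hk.
have [a1 a2] := hv k hk; have c1 := fn_globe u k; have c2 := fn_le (und x) k.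
rewrite fn_comp fn_L // fn_tau; iflia.
Qed.

Lemma sig_L a (x : Hom m.+1 a t) u i : valid x u i -> compH (sig t i) (L i x u) = x.
Proof.
move=> hv; have [hi hv'] := hv.
have hfn : forall k, k <= size a -> fn (und (compH (sig t i) (L i x u))) k = fn (und x) k.
  move=> k hk; have [a1 a2] := hv' k hk; have c1 := fn_globe u k; have c2 := fn_le (und x) k.
  rewrite fn_comp fn_L // fn_sig //; iflia.
apply: Hom_ext => // j l hj hl hs.
have hsx : seg (und x) j l by move: hs; rewrite /seg !hfn // ltnW.
have [a1 a2] := hv' j (ltnW hj); have [b1 b2] := hv' j.+1 hj.
have := fn_globe u j; have := fn_globe u j.+1 => c1 c2.
pose l2 := if l < i then l else l.+1.
have s1 : seg (und (L i x u)) j l2.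
  rewrite /seg !fn_L ?(ltnW hj) // /l2; seglia.
have s2 : seg (und (sig t i)) l2 l by rewrite /seg !fn_sig // /l2; iflia.
rewrite (cmpN_comp hj hl s1 s2) cmpN_sig ?size_thi; try (rewrite /l2; iflia).
rewrite cmpN_L ?size_thi //; last by rewrite /l2; iflia.
have hne : l2 != i by rewrite /l2; apply/eqP; iflia.
rewrite /Lc (negbTE hne).
have -> : sigF i l2 = l by rewrite /l2; iflia.
apply: dflt_cancel.
rewrite oth_thi_ne //; congr oth; rewrite /l2; try iflia.
exact: s2.
Qed.

Lemma fn_thi a i (w : Hom m.+1 a (thi t i)) j : fn (und w) j <= p.+1.
Proof. by rewrite -(size_thi t i); exact: fn_le. Qed.

Lemma valid_sig a i (w : Hom m.+1 a (thi t i)) : i <= p ->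
  valid (compH (sig t i) w) (compH (tau t i) w) i.
Proof.
move=> hi; split => // j hj.
have hw := fn_thi w j.
rewrite !fn_comp fn_sig // fn_tau //; split; iflia.
Qed.

Lemma L_sig a i (w : Hom m.+1 a (thi t i)) : i <= p ->
  L i (compH (sig t i) w) (compH (tau t i) w) = w.
Proof.
move=> hi; have hv := valid_sig w hi.
have hfn : forall k, k <= size a -> fn (und (L i (compH (sig t i) w) (compH (tau t i) w))) k = fn (und w) k.
  move=> k hk; have hw := fn_thi w k.
  rewrite fn_L // !fn_comp fn_sig // fn_tau //; iflia.
apply: Hom_ext => // j l hj hl hs.
rewrite size_thi in hl.
have hsw : seg (und w) j l by move: hs; rewrite /seg !hfn // ltnW.
rewrite cmpN_L // /Lc.
case: eqP => hli.
  apply: hom0'; rewrite hli; exact: oth_thi_i.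
have s2 : seg (und (sig t i)) l (sigF i l).
  rewrite /seg (fn_sig hi (ltnW hl)) (fn_sig hi hl).
  move/eqP: hli; move: hl hi; clear; rewrite /sigF => hl hi hli.
  apply/andP; split; case: ifP => ?; try case: ifP => ?; try lia.
have hl2 : sigF i l < p by move: hl hli hi; clear; rewrite /sigF; case: ifP; lia.
rewrite (cmpN_comp hj hl2 hsw s2) cmpN_sig //.
apply: dflt_cancel; apply: oth_thi_ne => //; exact/eqP.
Qed.

Lemma valid_incl a (v : Hom m.+1 (zero m.+1) t) (w : Hom m.+1 a (globe m)) :
  valid (incl0 v) w (fn (und v) 0).
Proof.
split; first by have := fn_le (und v) 0.
move=> j hj; rewrite /incl0 fn_comp fn_some; lia.
Qed.

Lemma L_incl a (v : Hom m.+1 (zero m.+1) t) (w : Hom m.+1 a (globe m)) :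
  L (fn (und v) 0) (incl0 v) w = compH (uI t (fn (und v) 0)) w.
Proof.
have hi : fn (und v) 0 <= p by have := fn_le (und v) 0.
have hfn : forall k, k <= size a -> fn (und (L (fn (und v) 0) (incl0 v) w)) k = fn (und v) 0 + fn (und w) k.
  by move=> k hk; rewrite fn_L // /incl0 fn_comp fn_some.
apply: Hom_ext => [k hk|j l hj hl hs].
  by rewrite hfn // fn_comp fn_uI // fn_globe.
have e : l = fn (und v) 0.
  have c1 := fn_globe w j; have c2 := fn_globe w j.+1.
  move: hs; rewrite /seg (hfn j (ltnW hj)) (hfn j.+1 hj) => /andP[]; lia.
apply: hom0'; rewrite e; exact: oth_thi_i.
Qed.

Lemma vtx_eta (v : Hom m.+1 (zero m.+1) t) : v = vtx t (fn (und v) 0).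
Proof.
apply: Hom_ext => // k hk.
have -> : k = 0 by move: hk; rewrite /=; lia.
by rewrite fn_vtx //; have := fn_le (und v) 0.
Qed.

End F.


Section G.
Variable m : nat.
Variable t : Obj m.+1.
Local Notation p := (size t).

Definition idx a (x : Hom m.+1 a t) (u : Hom m.+1 a (globe m)) : nat :=
  \max_(j < (size a).+1 | fn (und u) j == 0) fn (und x) j.

Lemma valid_idx a (x : Hom m.+1 a t) (u : Hom m.+1 a (globe m)) : valid x u (idx x u).
Proof.
split; first by apply/bigmax_leqP => j _; exact: fn_le.
move=> j hj; split => hu.
  have hj' : j < (size a).+1 by [].
  have := @leq_bigmax_cond _ (fun j : 'I_(size a).+1 => fn (und u) j == 0)
     (fun j : 'I_(size a).+1 => fn (und x) j) (Ordinal hj').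
  by rewrite /= hu eqxx => /(_ isT).
apply/bigmax_leqP => j' /eqP hj'.
have hlt : j' < j.
  case: (ltnP j' j) => // h.
  have := fmono u h (ltn_ord j'); lia.
apply: fmono => //; lia.
Qed.

Lemma valid_comp a b (h : Hom m.+1 b a) (x : Hom m.+1 a t) u i :
  valid x u i -> valid (compH x h) (compH u h) i.
Proof.
move=> [hi hv]; split => // j hj; rewrite !fn_comp; apply: hv; exact: fn_le.
Qed.

Lemma valid_between a (x : Hom m.+1 a t) u i k l :
  valid x u i -> valid x u k -> i <= l <= k -> valid x u l.
Proof.
move=> [hi hv] [hk hv'] /andP[h1 h2]; split; first lia.
move=> j hj; have [a1 a2] := hv j hj; have [b1 b2] := hv' j hj; split; lia.
Qed.
End G.

Lemma natural_comp n (A B C : PSh n) (f : PMap A B) (g : PMap B C) :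
  natural f -> natural g -> natural (fun a x => g a (f a x)).
Proof. by move=> hf hg a b h x; rewrite hf hg. Qed.


Theorem proposition3p13 (m : nat) (t : Obj m.+1)
  (PJ : PSh m.+1)
  (j1 : PMap (prodP (Yon t) (Yon (globe m))) PJ)
  (j2 : PMap (prodP (constP t) (JP m)) PJ)
  (HJ : is_pushout (span_u t) (span_v t) j1 j2)
  (P : nat -> PSh m.+1)
  (phi : forall i, PMap (Yon (thi t i)) (P i))
  (psi : forall i, PMap (JP m) (P i))
  (HP : forall i, i <= size t -> is_pushout (Ymap (uI t i)) (iJ m) (phi i) (psi i))
  (Q : PSh m.+1) (c : forall i, PMap (P i) Q)
  (HQ : @is_zigzag_colim m.+1 (size t) (Yon t) P
          (fun i a (x : Hom m.+1 a t) => phi i a (compH (alpha t i) x))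
          (fun i a (x : Hom m.+1 a t) => phi i.+1 a (compH (beta t i.+1) x)) Q c) :
  exists (eta : PMap PJ Q) (eps : PMap Q PJ),
    natural eta /\ natural eps /\
    (forall a x, eps a (eta a x) = x) /\ (forall a y, eta a (eps a y) = y).
Proof.
case: HJ => lawPJ [nj1 [nj2 [sqJ UPJ]]].
case: HQ => lawQ [natc [compatQ UPQ]].
have nphi : forall i, i <= size t -> natural (phi i).
  by move=> i hi; case: (HP i hi) => _ [h _].
have npsi : forall i, i <= size t -> natural (psi i).
  by move=> i hi; case: (HP i hi) => _ [_ [h _]].
have sqP : forall i, i <= size t -> forall a w, phi i a (compH (uI t i) w) = psi i a (iJ m a w).
  by move=> i hi; case: (HP i hi) => _ [_ [_ [h _]]].
have LD : forall a (x : Hom m.+1 a t) u i k, valid x u i -> valid x u k ->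
    c i a (phi i a (L i x u)) = c k a (phi k a (L k x u)).
  suff H : forall a (x : Hom m.+1 a t) u d i, valid x u i -> valid x u (i + d) ->
      c i a (phi i a (L i x u)) = c (i + d) a (phi (i + d) a (L (i + d) x u)).
    move=> a x u i k hi hk; case: (leqP i k) => hik.
      by have := H a x u (k - i) i hi; rewrite subnKC //; apply.
    by have := H a x u (i - k) k hk; rewrite subnKC ?(ltnW hik) // => ->.
  move=> a x u d; elim: d => [|d IH] i hi hk; first by rewrite addn0.
  have hi1 : valid x u i.+1 by apply: (valid_between hi hk); lia.
  have hp : i < size t by have := proj1 hk; have := proj1 hi1; lia.
  rewrite (L_alpha hi hi1) (compatQ i hp a x) -(L_beta hi hi1).
  by rewrite (IH i.+1 hi1) ?addSnnS.
pose zz1 : PMap (prodP (Yon t) (Yon (globe m))) Q :=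
  fun a xu => c (idx xu.1 xu.2) a (phi (idx xu.1 xu.2) a (L (idx xu.1 xu.2) xu.1 xu.2)).
pose zz2 : PMap (prodP (constP t) (JP m)) Q :=
  fun a vo => c (fn (und vo.1) 0) a (psi (fn (und vo.1) 0) a vo.2).
have hidx : forall a (x : Hom m.+1 a t) u, idx x u <= size t by move=> *; exact: (proj1 (valid_idx _ _)).
have iv_le : forall v : Hom m.+1 (zero m.+1) t, fn (und v) 0 <= size t by move=> v; exact: fn_le.
have nzz1 : natural zz1.
  move=> a b f [x u]; rewrite /zz1 /=.
  have hv := valid_idx x u.
  rewrite (LD _ _ _ _ (idx x u) (valid_idx _ _) (valid_comp f hv)).
  rewrite -(L_comp f hv).
  have := nphi _ (hidx _ x u) a b f (L (idx x u) x u); rewrite /= => ->.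
  by rewrite natc.
have nzz2 : natural zz2.
  move=> a b f [v o]; rewrite /zz2 /=.
  have := npsi _ (iv_le v) a b f o; rewrite /= => ->.
  by rewrite natc.
have czz : forall a x, zz1 a (span_u t a x) = zz2 a (span_v t a x).
  move=> a [v w]; rewrite /zz1 /zz2 /span_u /span_v /=.
  rewrite (LD _ _ _ _ (fn (und v) 0) (valid_idx _ _) (valid_incl v w)).
  by rewrite L_incl sqP.
have [eta [neta [eta1 [eta2 _]]]] := UPJ Q zz1 zz2 lawQ nzz1 nzz2 czz.
pose e i : ob PJ (thi t i) := j1 (thi t i) (sig t i, tau t i).
have act_e : forall i a (y : Hom m.+1 a (thi t i)), act PJ y (e i) = j1 a (compH (sig t i) y, compH (tau t i) y).
  by move=> i a y; rewrite /e -nj1.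
have Ez : forall i, exists h : PMap (P i) PJ, i <= size t ->
    natural h /\ (forall a y, h a (phi i a y) = act PJ y (e i)) /\
    (forall a o, h a (psi i a o) = j2 a (vtx t i, o)).
  move=> i; case: (leqP i (size t)) => hi; last first.
    by exists (fun a _ => j1 a (some_hom a t, some_hom a (globe m))) => h; lia.
  case: (HP i hi) => _ [_ [_ [_ UPP]]].
  have natA : natural (fun a (y : ob (Yon (thi t i)) a) => act PJ y (e i)).
    by move=> a b f y; rewrite /= (proj2 lawPJ).
  have natB : natural (fun a (o : ob (JP m) a) => j2 a (vtx t i, o)).
    by move=> a b f o; rewrite -nj2.
  have cB : forall a w, act PJ (Ymap (uI t i) a w) (e i) = j2 a (vtx t i, iJ m a w).
    move=> a w; rewrite /Ymap (proj2 lawPJ) act_e sig_uI // tau_uI //.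
    have := sqJ (globe m) (vtx t i, idH (globe m)); rewrite /span_u /span_v /incl0 /= => ->.
    by rewrite -nj2.
  have [h [nh [h1 [h2 _]]]] := UPP PJ _ _ lawPJ natA natB cB.
  by exists h.
pose z i := proj1_sig (constructive_indefinite_description _ (Ez i)).
have hz : forall i, i <= size t -> natural (z i) /\ (forall a y, z i a (phi i a y) = act PJ y (e i)) /\
    (forall a o, z i a (psi i a o) = j2 a (vtx t i, o)).
  by move=> i hi; exact: (proj2_sig (constructive_indefinite_description _ (Ez i)) hi).
have natz : forall i, i <= size t -> natural (z i) by move=> i hi; case: (hz i hi).
have cz : forall i, i < size t -> forall a x,
    z i a (phi i a (compH (alpha t i) x)) = z i.+1 a (phi i.+1 a (compH (beta t i.+1) x)).
  move=> i hi a x.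
  rewrite (proj1 (proj2 (hz i (ltnW hi)))) (proj1 (proj2 (hz i.+1 hi))).
  rewrite !(proj2 lawPJ) !act_e sig_ab // tau_ab //.
have [eps [neps [epsc _]]] := UPQ PJ z lawPJ natz cz.
exists eta, eps; split => //; split => //; split.
-
  have [h [_ [_ [_ uniq]]]] := UPJ PJ j1 j2 lawPJ nj1 nj2 sqJ.
  have nid : natural (fun a (x : ob PJ a) => x) by [].
  have E1 := uniq (fun a x => x) nid (fun _ _ => erefl) (fun _ _ => erefl).
  have E2 := uniq (fun a x => eps a (eta a x)) (natural_comp neta neps).
  move=> a x; rewrite E2 ?E1 // => b y.
    case: y => xx uu; rewrite eta1 /zz1 /= epsc // (proj1 (proj2 (hz _ (hidx _ _ _)))) act_e.
    by rewrite sig_L ?tau_L //; exact: valid_idx.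
  case: y => v o; rewrite eta2 /zz2 /= epsc // (proj2 (proj2 (hz _ (iv_le v)))).
  by rewrite -vtx_eta.
-
  have [h [_ [_ uniq]]] := UPQ Q c lawQ natc compatQ.
  have nid : natural (fun a (x : ob Q a) => x) by [].
  have E1 := uniq (fun a x => x) nid (fun _ _ _ _ => erefl).
  have E2 := uniq (fun a x => eta a (eps a x)) (natural_comp neps neta).
  move=> a y; rewrite E2 ?E1 // => i hi b y'.
  case: (HP i hi) => _ [_ [_ [_ UPP]]].
  have nA : natural (fun a y => c i a (phi i a y)) by apply: natural_comp; [exact: nphi|exact: natc].
  have nB : natural (fun a y => c i a (psi i a y)) by apply: natural_comp; [exact: npsi|exact: natc].
  have cAB : forall a w, c i a (phi i a (Ymap (uI t i) a w)) = c i a (psi i a (iJ m a w)).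
    by move=> a' w; rewrite /Ymap sqP.
  have [h' [_ [_ [_ uniq']]]] := UPP Q _ _ lawQ nA nB cAB.
  have F1 := uniq' (c i) (natc i hi) (fun _ _ => erefl) (fun _ _ => erefl).
  have F2 := uniq' (fun a x => eta a (eps a (c i a x))) (natural_comp (natc i hi) (natural_comp neps neta)).
  rewrite F2 ?F1 // => a' w.
    rewrite epsc // (proj1 (proj2 (hz i hi))) act_e eta1 /zz1 /=.
    rewrite (LD _ _ _ _ i (valid_idx _ _) (valid_sig w hi)).
    by rewrite L_sig.
  rewrite epsc // (proj2 (proj2 (hz i hi))) eta2 /zz2 /=.
  by rewrite fn_vtx.
Qed.
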